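(* For a right $R$-module $M$ the following are equivalent: (a) $M$ is a finite $\Sigma$-Rickart module; (b) every finitely $M$-generated submodule of any module in $\mathrm{add}(M)$ satisfies the $D_2$ condition.
   Context: Modules are unitary right $R$-modules; $M^{(n)}$ is the direct sum of $n$ copies of $M$. $M$ is Rickart if $\ker\varphi$ is a direct summand of $M$ for all $\varphi\in\mathrm{End}_R(M)$; $M$ is finite $\Sigma$-Rickart if $M^{(n)}$ is Rickart for all $n>0$. $\mathrm{add}(M)$ is the class of modules isomorphic to a direct summand of $M^{(n)}$ for some integer $n>0$. A module $N$ is finitely $M$-generated if there is an epimorphism $M^{(n)}\to N$ for some $n>0$. A module $X$ satisfies the $D_2$ condition if for every submodule $Y\le X$ such that $X/Y$ is isomorphic to a direct summand of $X$, $Y$ is a direct summand of $X$. *)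

(* Defs.v *)
(* Right R-modules are represented as left modules over the
   converse ring R^c (lmodType R^c). *)
From mathcomp Require Import all_boot all_algebra.
Set Implicit Arguments. Unset Strict Implicit. Unset Printing Implicit Defensive.
Import GRing.Theory.
Local Open Scope ring_scope.

Section ModuleNotions.
Variable S : nzRingType.

Definition is_submodule (V : lmodType S) (A : V -> Prop) : Prop :=
  A 0 /\ (forall x y, A x -> A y -> A (x + y)) /\
  (forall (a : S) x, A x -> A (a *: x)).

Definition is_direct_summand (V : lmodType S) (A : V -> Prop) : Prop :=
  is_submodule A /\
  exists B : V -> Prop, is_submodule B /\
    (forall v, A v -> B v -> v = 0) /\
    (forall v, exists a b, A a /\ B b /\ v = a + b).

Definition lker (U V : lmodType S) (f : {linear U -> V}) : U -> Prop :=
  fun u => f u = 0.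

Definition limage (U V : lmodType S) (f : {linear U -> V}) : V -> Prop :=
  fun v => exists u, f u = v.

Definition Rickart (M : lmodType S) : Prop :=
  forall phi : {linear M -> M}, is_direct_summand (lker phi).

Definition dsum_pow (M : lmodType S) (n : nat) : lmodType S :=
  {ffun 'I_n -> M}.

Definition finite_Sigma_Rickart (M : lmodType S) : Prop :=
  forall n : nat, (0 < n)%N -> Rickart (dsum_pow M n).

Definition iso_to_direct_summand (Q N : lmodType S) : Prop :=
  exists h : {linear Q -> N}, injective h /\ is_direct_summand (limage h).

Definition in_add (M X : lmodType S) : Prop :=
  exists n : nat, (0 < n)%N /\ iso_to_direct_summand X (dsum_pow M n).

Definition fin_M_generated (M N : lmodType S) : Prop :=
  exists n : nat, (0 < n)%N /\
    exists g : {linear dsum_pow M n -> N}, forall y, exists x, g x = y.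

(* The quotient X/Y is
   represented (up to isomorphism) by any module Q together with an
   epimorphism X -> Q whose kernel is Y. *)
Definition D2 (X : lmodType S) : Prop :=
  forall Y : X -> Prop, is_submodule Y ->
    (exists (Q : lmodType S) (q : {linear X -> Q}),
        (forall w, exists x, q x = w) /\ (forall x, Y x <-> q x = 0) /\
        iso_to_direct_summand Q X) ->
    is_direct_summand Y.

End ModuleNotions.

(* Main.v *)
Set Warnings "-all".
From HB Require Import structures.
Require Import Defs.
From mathcomp Require Import all_boot all_algebra.
From Stdlib Require Import ClassicalEpsilon.
Import GRing.Theory.
Local Open Scope ring_scope.
Set Implicit Arguments. Unset Strict Implicit. Unset Printing Implicit Defensive.

Section SubM.
Variables (S : nzRingType) (V : lmodType S) (P : V -> Prop).
Definition pb (v : V) : bool := if excluded_middle_informative (P v) then true else false.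
Lemma pbP v : pb v <-> P v.
Proof. by rewrite /pb; case: excluded_middle_informative. Qed.
Definition subm (_ : is_submodule P) := {x : V | pb x}.
Variable HP : is_submodule P.
HB.instance Definition _ := Choice.on (subm HP).
Lemma sm0 : pb 0. Proof. apply/pbP; exact: HP.1. Qed.
Lemma smD x y : pb x -> pb y -> pb (x + y).
Proof. move=> /pbP hx /pbP hy; apply/pbP; exact: HP.2.1. Qed.
Lemma smZ a x : pb x -> pb (a *: x).
Proof. move=> /pbP hx; apply/pbP; exact: HP.2.2. Qed.
Lemma smN x : pb x -> pb (- x).
Proof. move=> h; rewrite -scaleN1r; exact: smZ. Qed.
Definition szero : subm HP := exist _ 0 sm0.
Definition sadd (x y : subm HP) : subm HP := exist _ (val x + val y) (smD (valP x) (valP y)).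
Definition sopp (x : subm HP) : subm HP := exist _ (- val x) (smN (valP x)).
Definition sscale a (x : subm HP) : subm HP := exist _ (a *: val x) (smZ a (valP x)).
Lemma saddA : associative sadd. Proof. by move=> x y z; apply: val_inj; rewrite /= addrA. Qed.
Lemma saddC : commutative sadd. Proof. by move=> x y; apply: val_inj; rewrite /= addrC. Qed.
Lemma sadd0 : left_id szero sadd. Proof. by move=> x; apply: val_inj; rewrite /= add0r. Qed.
Lemma saddN : left_inverse szero sopp sadd. Proof. by move=> x; apply: val_inj; rewrite /= addNr. Qed.
HB.instance Definition _ := GRing.isZmodule.Build (subm HP) saddA saddC sadd0 saddN.
Lemma sscA a b v : sscale a (sscale b v) = sscale (a * b) v.
Proof. by apply: val_inj; rewrite /= scalerA. Qed.
Lemma ssc1 : left_id 1 sscale. Proof. by move=> x; apply: val_inj; rewrite /= scale1r. Qed.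
Lemma sscDr : right_distributive sscale +%R. Proof. by move=> a x y; apply: val_inj; rewrite /= scalerDr. Qed.
Lemma sscDl v : {morph sscale^~ v: a b / a + b}. Proof. by move=> a b; apply: val_inj; rewrite /= scalerDl. Qed.
HB.instance Definition _ := GRing.Zmodule_isLmodule.Build S (subm HP) sscA ssc1 sscDr sscDl.
Lemma svalD (x y : subm HP) : val (x + y) = val x + val y. Proof. by []. Qed.
Lemma svalZ a (x : subm HP) : val (a *: x) = a *: val x. Proof. by []. Qed.
Lemma sval0 : val (0 : subm HP) = 0. Proof. by []. Qed.
Lemma svalN (x : subm HP) : val (- x) = - val x. Proof. by []. Qed.
Lemma sval_lin : linear (val : subm HP -> V). Proof. by []. Qed.
Definition mks (v : V) (h : P v) : subm HP := exist _ v (proj2 (pbP v) h).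
Lemma valP' (x : subm HP) : P (val x). Proof. exact/pbP/(valP x). Qed.
End SubM.

Section Lin.
Variables (S : nzRingType) (U V : lmodType S).
Definition mkl (f : U -> V) (lf : linear f) : U -> V := f.
HB.instance Definition _ f lf := GRing.isLinear.Build S U V *:%R (@mkl f lf) lf.
End Lin.

Section Gen.
Variables (S : nzRingType).

Lemma preim_sub (V W : lmodType S) (g : {linear V -> W}) (Y : W -> Prop) :
  is_submodule Y -> is_submodule (fun v => Y (g v)).
Proof.
move=> [h0 [hD hZ]]; split; first by rewrite linear0.
split=> [x y hx hy|a x hx]; first by rewrite linearD; apply: hD.
by rewrite linearZ; apply: hZ.
Qed.

Lemma img_sub (V W : lmodType S) (g : {linear V -> W}) (C : V -> Prop) :
  is_submodule C -> is_submodule (fun w => exists c, C c /\ g c = w).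
Proof.
move=> [h0 [hD hZ]]; split; first by exists 0; rewrite linear0.
split=> [x y [c [hc <-]] [d [hd <-]]|a x [c [hc <-]]].
  by exists (c + d); rewrite linearD; split=> //; apply: hD.
by exists (a *: c); rewrite linearZ; split=> //; apply: hZ.
Qed.

Lemma push_summand (V W : lmodType S) (g : {linear V -> W}) (Y : W -> Prop)
  (K : V -> Prop) : (forall w, exists v, g v = w) -> is_submodule Y ->
  (forall v, K v <-> Y (g v)) -> is_direct_summand K -> is_direct_summand Y.
Proof.
move=> gs HY HK [_ [C [HC [Hi Hs]]]]; split=> //.
exists (fun w => exists c, C c /\ g c = w); split; first exact: img_sub.
split.
  move=> w Yw [c [Cc gc]]; subst w.
  by rewrite (Hi c) ?linear0 // HK.
move=> w; have [v <-] := gs w; have [a [c [Ka [Cc ->]]]] := Hs v.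
exists (g a), (g c); split; first by apply/HK.
by split; [exists c | rewrite linearD].
Qed.

Lemma limage_sub (V W : lmodType S) (g : {linear V -> W}) : is_submodule (limage g).
Proof.
split; first by exists 0; rewrite linear0.
split=> [x y [c <-] [d <-]|a x [c <-]]; first by exists (c + d); rewrite linearD.
by exists (a *: c); rewrite linearZ.
Qed.

Lemma inj_lin0 (V W : lmodType S) (f : {linear V -> W}) x :
  injective f -> (f x = 0 <-> x = 0).
Proof. by move=> fi; split=> [h|->]; [apply: fi; rewrite h linear0 | rewrite linear0]. Qed.

Variable M : lmodType S.
Variables k n : nat.
Definition lh (x : dsum_pow M (k + n)) : dsum_pow M k := [ffun i => x (lshift n i)].
Definition rh (x : dsum_pow M (k + n)) : dsum_pow M n := [ffun i => x (rshift k i)].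
Definition cmb (a : dsum_pow M k) (b : dsum_pow M n) : dsum_pow M (k + n) :=
  [ffun i => match split i with inl j => a j | inr j => b j end].
Lemma lh_cmb a b : lh (cmb a b) = a.
Proof. by apply/ffunP=> i; rewrite !ffunE (unsplitK (inl _ i)). Qed.
Lemma rh_cmb a b : rh (cmb a b) = b.
Proof. by apply/ffunP=> i; rewrite !ffunE (unsplitK (inr _ i)). Qed.
Lemma cmbK x : cmb (lh x) (rh x) = x.
Proof. by apply/ffunP=> i; rewrite !ffunE; case: split_ordP => j ->; rewrite ffunE. Qed.
Lemma lh_lin : linear lh. Proof. by move=> a x y; apply/ffunP=> i; rewrite !ffunE. Qed.
Lemma rh_lin : linear rh. Proof. by move=> a x y; apply/ffunP=> i; rewrite !ffunE. Qed.
Lemma cmbD a b c d : cmb a b + cmb c d = cmb (a + c) (b + d).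
Proof. by apply/ffunP=> i; rewrite !ffunE; case: split => j; rewrite ffunE. Qed.
Lemma cmbZ r a b : r *: cmb a b = cmb (r *: a) (r *: b).
Proof. by apply/ffunP=> i; rewrite !ffunE; case: split => j; rewrite ffunE. Qed.
Lemma cmb0 : cmb 0 0 = 0.
Proof. by apply/ffunP=> i; rewrite !ffunE; case: split => j; rewrite ffunE. Qed.
Lemma cmb_eq0 a b : cmb a b = 0 <-> a = 0 /\ b = 0.
Proof.
split=> [h|[-> ->]]; last exact: cmb0.
by split; [rewrite -(lh_cmb a b) h -cmb0 lh_cmb | rewrite -(rh_cmb a b) h -cmb0 rh_cmb].
Qed.
Lemma lhD x y : lh (x + y) = lh x + lh y. Proof. by apply/ffunP=> i; rewrite !ffunE. Qed.
Lemma lhZ r x : lh (r *: x) = r *: lh x. Proof. by apply/ffunP=> i; rewrite !ffunE. Qed.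
Lemma lh0 : lh 0 = 0. Proof. by apply/ffunP=> i; rewrite !ffunE. Qed.
Lemma rhD x y : rh (x + y) = rh x + rh y. Proof. by apply/ffunP=> i; rewrite !ffunE. Qed.
Lemma rhZ r x : rh (r *: x) = r *: rh x. Proof. by apply/ffunP=> i; rewrite !ffunE. Qed.
Lemma rh0 : rh 0 = 0. Proof. by apply/ffunP=> i; rewrite !ffunE. Qed.
Lemma rhN x : rh (- x) = - rh x. Proof. by apply/ffunP=> i; rewrite !ffunE. Qed.
End Gen.


Lemma dirA (R : nzRingType) (M : lmodType R^c) :
  finite_Sigma_Rickart M ->
  (forall X : lmodType R^c, in_add M X ->
     forall N : lmodType R^c,
       (exists i : {linear N -> X}, injective i) ->
       fin_M_generated M N -> D2 N).
Proof.
move=> HR X [m [hm [e [einj _]]]] N [i iinj] [k [hk [g gs]]] Y HY.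
move=> [Q [q [qs [qY [h [hinj _]]]]]].
pose f := fun x => e (i (h (q (g x)))).
have lf : linear (fun z : dsum_pow M (k+m) => cmb (0 : dsum_pow M k) (f (lh z))).
  move=> a x y /=; rewrite lh_lin /f !linearP cmbZ cmbD scaler0 addr0 //.
have Hk : (0 < k + m)%N by rewrite addn_gt0 hk.
pose psi := (mkl lf : {linear dsum_pow M (k+m) -> dsum_pow M (k+m)}).
have Hsum := HR (k+m)%N Hk psi.
have H1 : is_direct_summand (fun x => Y (g x)).
  pose lhm := (mkl (@lh_lin _ M k m) : {linear _ -> _}). refine (@push_summand _ _ _ lhm (fun x => Y (g x)) (Defs.lker psi) _ _ _ Hsum).
  - by move=> w; exists (cmb w 0); rewrite /= /mkl lh_cmb.
  - exact: (preim_sub g HY).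
  move=> z; rewrite /Defs.lker /= /mkl cmb_eq0 /f qY.
  rewrite (inj_lin0 _ einj) (inj_lin0 _ iinj) (inj_lin0 _ hinj).
  by split=> [[]|] //.
exact: (@push_summand _ _ _ g _ _ gs HY (fun _ => iff_refl _) H1).
Qed.


Lemma dirB (R : nzRingType) (M : lmodType R^c) :
  (forall X : lmodType R^c, in_add M X ->
     forall N : lmodType R^c,
       (exists i : {linear N -> X}, injective i) ->
       fin_M_generated M N -> D2 N) ->
  finite_Sigma_Rickart M.
Proof.
move=> H n hn phi.
pose V2 := dsum_pow M (n + n).
have HP : is_submodule (fun x : V2 => exists a, rh x = phi a).
  split; first by exists 0; rewrite rh0 linear0.
  split=> [x y [a ha] [b hb]|r x [a ha]].
    by exists (a + b); rewrite rhD ha hb linearD.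
  by exists (r *: a); rewrite rhZ ha linearZ.
have HI : is_submodule (fun v : dsum_pow M n => exists a, v = phi a).
  split; first by exists 0; rewrite linear0.
  split=> [x y [a ->] [b ->]|r x [a ->]].
    by exists (a + b); rewrite linearD.
  by exists (r *: a); rewrite linearZ.
have Hnn : (0 < n + n)%N by rewrite addn_gt0 hn.
have lid : linear (fun x : V2 => x) by [].
pose idl := (mkl lid : {linear V2 -> V2}).
have vl := @sval_lin _ _ _ HP.
pose vL := (mkl vl : {linear subm HP -> V2}).
have gP : forall z : V2, exists a, rh (cmb (lh z) (phi (rh z))) = phi a.
  by move=> z; exists (rh z); rewrite rh_cmb.
pose g0 := fun z : V2 => mks HP (gP z).
have gl : linear g0.
  move=> r x y; apply: val_inj.
  by rewrite /= lhD lhZ rhD rhZ linearP cmbZ cmbD.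
pose gL := (mkl gl : {linear V2 -> subm HP}).
have lvl : linear (fun y : subm HP => lh (val y)).
  by move=> r x y; rewrite /= ?svalD ?svalZ lhD lhZ.
pose lvL := (mkl lvl : {linear subm HP -> dsum_pow M n}).
pose Yset := fun y : subm HP => phi (lh (val y)) = 0.
have HY : is_submodule Yset.
  split; first by rewrite /Yset sval0 lh0 linear0.
  split=> [x y hx hy|r x hx]; rewrite /Yset.
    by rewrite svalD lhD linearD hx hy addr0.
  by rewrite svalZ lhZ linearZ hx; exact: scaler0.
have HD2 : D2 (subm HP).
  apply: (H V2) => //.
  - exists (n + n)%N; split=> //; exists idl; split; first by move=> x y.
    split; first exact: limage_sub.
    exists (fun v => v = 0); split.
      by split=> //; split=> [x y -> ->|r x ->]; rewrite ?addr0 ?scaler0.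
    split=> [v _ //|v]; exists v, 0; split; first by exists v.
    by rewrite addr0.
  - by exists vL => x y /val_inj.
  - exists (n + n)%N; split=> //; exists gL => y.
    have [a ha] := valP' y.
    have hz : rh (cmb (lh (val y)) a) = a by rewrite rh_cmb.
    exists (cmb (lh (val y)) a); apply: val_inj.
    by rewrite /= /mkl /g0 /= lh_cmb hz -ha cmbK.
have HYs : is_direct_summand Yset.
  apply: HD2 => //.
  have qP : forall y : subm HP, exists a, phi (lh (val y)) = phi a.
    by move=> y; exists (lh (val y)).
  pose q0 := fun y : subm HP => mks HI (qP y).
  have ql : linear q0.
    by move=> r x y; apply: val_inj; rewrite /= ?svalD ?svalZ /= lhD lhZ linearP.
  pose qL := (mkl ql : {linear subm HP -> subm HI}).
  have hP : forall w : subm HI, exists a, rh (cmb (0 : dsum_pow M n) (val w)) = phi a.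
    by move=> w; have [a ha] := valP' w; exists a; rewrite rh_cmb.
  pose h0 := fun w : subm HI => mks HP (hP w).
  have hl : linear h0.
    move=> r x y; apply: val_inj; rewrite /= ?svalD ?svalZ /=.
    by rewrite cmbZ cmbD scaler0 addr0.
  pose hL := (mkl hl : {linear subm HI -> subm HP}).
  have hinj : injective hL.
    move=> x y hxy; apply: val_inj.
    have := congr1 (fun z : subm HP => rh (val z)) hxy.
    by rewrite /= /mkl /h0 /= !rh_cmb.
  exists (subm HI), qL; split.
    move=> w; have [a ha] := valP' w.
    have hz : exists b, rh (cmb a (0 : dsum_pow M n)) = phi b by exists 0; rewrite rh_cmb linear0.
    exists (mks HP hz); apply: val_inj.
    by rewrite /= /mkl /q0 /= lh_cmb ha.
  split.
    move=> y; rewrite /Yset; split=> [hy|hy].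
      by apply: val_inj; rewrite /= /mkl /q0 /= hy.
    by have := congr1 val hy; rewrite /= /mkl /q0 /=.
  exists hL; split=> //; split; first exact: limage_sub.
  exists (fun y : subm HP => rh (val y) = 0); split.
    split; first by rewrite sval0 rh0.
    split=> [x y hx hy|r x hx]; first by rewrite svalD rhD hx hy addr0.
    by rewrite svalZ rhZ hx scaler0.
  split.
    move=> v [w <-] hw.
    have w0 : w = 0.
      apply: val_inj; move: hw; rewrite /= /mkl /h0 /= rh_cmb => ->.
      by [].
    by rewrite w0 linear0.
  move=> y; exists (hL (mks HI (valP' y))), (y - hL (mks HI (valP' y))).
  split; first by eexists.
  split; last by rewrite addrC subrK.
  by rewrite svalD svalN rhD rhN /= /mkl /h0 /= rh_cmb /= subrr.
refine (@push_summand _ _ _ lvL (Defs.lker phi) Yset _ _ _ HYs).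
- move=> w.
  have hz : exists b, rh (cmb w (0 : dsum_pow M n)) = phi b by exists 0; rewrite rh_cmb linear0.
  by exists (mks HP hz); rewrite /= /mkl /= lh_cmb.
- split; first by rewrite /Defs.lker linear0.
  split=> [x y hx hy|r x hx]; rewrite /Defs.lker.
    by rewrite linearD hx hy addr0.
  by rewrite linearZ hx; exact: scaler0.
- by move=> y.
Qed.

Theorem mainTheorem4 (R : nzRingType) (M : lmodType R^c) :
  finite_Sigma_Rickart M <->
  (forall X : lmodType R^c, in_add M X ->
     forall N : lmodType R^c,
       (exists i : {linear N -> X}, injective i) ->
       fin_M_generated M N -> D2 N).
Proof. split; [exact: dirA | exact: dirB]. Qed.
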